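(* Let $R$ be a finite commutative ring with identity, and let $f=\frac{1}{1-X}=\sum_{k\ge 0}X^k\in R[[X]]$. Then the $\omega$-sequential function $\mu[f]:R[[X]]\to R[[X]],\ g\mapsto fg$ is finite state, and its set of remainders is $Q_{\mu[f]}=\{\,g\mapsto f\cdot(s+g)\ \mid\ s\in R\,\}$.
   Context: Identify $R^\omega$ (infinite words over the alphabet $R$) with $R[[X]]$ via $(a_0,a_1,\dots)\mapsto\sum_k a_kX^k$. For infinite words $x$, $x[0,n]$ denotes its prefix of length $n$. A map $\zeta:A^\omega\to B^\omega$ is $\omega$-sequential if whenever a finite word $u$ is a common prefix of $x$ and $y$, then $\zeta(x)[0,|u|]=\zeta(y)[0,|u|]$. For such $\zeta$ and a finite word $u$, write $\zeta(ux)=\epsilon(u)\zeta_u(x)$ for all $x\in A^\omega$, where $\epsilon(u)=\zeta(ux)[0,|u|]$ (independent of $x$) and $\zeta_u:A^\omega\to B^\omega$; $\zeta_u$ is the remainder of $\zeta$ for $u$. The set of remainders is $Q_\zeta=\{\zeta_u\mid u\in A^*\}$, and $\zeta$ is called finite state if $Q_\zeta$ is finite. *)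

(* Defs.v *)
From mathcomp Require Import all_boot all_order all_algebra.
From Stdlib Require List.
Set Implicit Arguments. Unset Strict Implicit. Unset Printing Implicit Defensive.
Import GRing.Theory.
Local Open Scope ring_scope.

(* Infinite words over A, identified with formal power series A[[X]]:
   the word (a_0,a_1,...) is the function k |-> a_k. *)
Definition iword (A : Type) := nat -> A.

Definition wprefix (A : Type) (x : iword A) (n : nat) : seq A := mkseq x n.

Definition wcat (A : Type) (u : seq A) (x : iword A) : iword A :=
  fun n => if (n < size u)%N then nth (x 0%N) u n else x (n - size u)%N.

Definition omega_sequential (A B : Type) (zeta : iword A -> iword B) : Prop :=
  forall (u : seq A) (x y : iword A),
    wprefix (zeta (wcat u x)) (size u) = wprefix (zeta (wcat u y)) (size u).

(* remainder zeta_u : zeta (u x) = eps(u) zeta_u(x), with |eps(u)| = |u| *)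
Definition remainder (A B : Type) (zeta : iword A -> iword B) (u : seq A)
  : iword A -> iword B :=
  fun x n => zeta (wcat u x) (n + size u)%N.

Definition remainders (A B : Type) (zeta : iword A -> iword B)
  : (iword A -> iword B) -> Prop :=
  fun q => exists u : seq A, q = remainder zeta u.

Definition finite_state (A B : Type) (zeta : iword A -> iword B) : Prop :=
  exists l : seq (iword A -> iword B),
    forall q, remainders zeta q -> List.In q l.

Definition ps_mul (R : pzRingType) (a b : iword R) : iword R :=
  fun n => \sum_(i < n.+1) a i * b (n - i)%N.
Definition ps_add (R : pzRingType) (a b : iword R) : iword R :=
  fun n => a n + b n.
Definition ps_const (R : pzRingType) (s : R) : iword R :=
  fun n => if n == 0%N then s else 0.

Definition mu (R : pzRingType) (f : iword R) : iword R -> iword R :=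
  fun g => ps_mul f g.

(* f = 1/(1-X) = sum_k X^k *)
Definition geom (R : pzRingType) : iword R := fun _ => 1.

(* Main.v *)
Require Import Defs.
From mathcomp Require Import all_boot all_algebra.
From Stdlib Require Import FunctionalExtensionality.
Import GRing.Theory.
Local Open Scope ring_scope.

Lemma mu_geom (R : finComPzRingType) (g : iword R) n :
  mu (geom R) g n = \sum_(i < n.+1) g i.
Proof.
rewrite /mu /ps_mul /geom (reindex_inj rev_ord_inj) /=.
apply: eq_bigr => i _; rewrite mul1r /= subSS.
by rewrite subKn // -ltnS.
Qed.

Lemma rem_eq (R : finComPzRingType) (u : seq R) :
  remainder (mu (geom R)) u =
  (fun g => mu (geom R) (ps_add (ps_const (\sum_(i < size u) u`_i)) g)).
Proof.
apply: functional_extensionality => x; apply: functional_extensionality => n.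
rewrite /remainder !mu_geom.
have -> : (n + size u).+1 = (size u + n.+1)%N by rewrite addnC addnS.
rewrite big_split_ord /= /ps_add big_split /=; congr (_ + _).
  have -> : \sum_(i < n.+1) ps_const (\sum_(i0 < size u) u`_i0) i
            = \sum_(i0 < size u) u`_i0.
    by rewrite big_ord_recl /ps_const /= big1_eq addr0.
  apply: eq_bigr => i _; rewrite /wcat /= ltn_ord.
  by apply: set_nth_default.
apply: eq_bigr => i _; rewrite /wcat /=.
by rewrite ltnNge leq_addr /= addKn.
Qed.

Lemma in_In (T : eqType) (x : T) (s : seq T) : x \in s -> List.In x s.
Proof.
elim: s => //= a s IH; rewrite inE => /orP [/eqP ->|H]; [by left | by right; auto].
Qed.

Theorem theorem7p14 (R : finComPzRingType) :
  omega_sequential (mu (geom R)) /\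
  finite_state (mu (geom R)) /\
  (forall q : iword R -> iword R,
     remainders (mu (geom R)) q <->
     exists s : R, q = (fun g => mu (geom R) (ps_add (ps_const s) g))).
Proof.
have Hrem : forall q : iword R -> iword R,
     remainders (mu (geom R)) q <->
     exists s : R, q = (fun g => mu (geom R) (ps_add (ps_const s) g)).
  move=> q; split.
    by case=> u ->; eexists; exact: rem_eq.
  case=> s ->; exists [:: s]; rewrite rem_eq /=.
  by rewrite big_ord_recl big_ord0 addr0.
split; last split; last exact: Hrem.
  move=> u x y; rewrite /wprefix /mkseq; apply/eq_in_map => n.
  rewrite mem_iota add0n /= => Hn.
  rewrite !mu_geom; apply: eq_bigr => i _.
  have Hi : (i < size u)%N by apply: leq_ltn_trans Hn; rewrite -ltnS.
  by rewrite /wcat Hi; apply: set_nth_default.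
exists (map (fun s : R => (fun g => mu (geom R) (ps_add (ps_const s) g))) (enum R)).
move=> q /Hrem [s ->]; apply: List.in_map; apply: in_In; by rewrite mem_enum.
Qed.
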